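(* Let $h(x)=\max\{s_+x,0\}+\min\{s_-x,0\}$ with $s_+>0$, $s_-\ge0$, $s_+\ne s_-$, applied entrywise, and consider $$\ell\big((W_j,b_j)_{j=1}^2\big)=\tfrac12\big\|W_2\,h(W_1X+b_1\mathbf{1}_3^T)+b_2\mathbf{1}_3^T-Y\big\|_F^2,$$ with $W_1\in\mathbb{R}^{2\times 2}$, $b_1\in\mathbb{R}^2$, $W_2\in\mathbb{R}^{1\times 2}$, $b_2\in\mathbb{R}$, and $X=\begin{bmatrix}1&0&\tfrac12\\0&1&\tfrac12\end{bmatrix}$, $Y=\begin{bmatrix}0&0&1\end{bmatrix}$. Then there is a tuple of parameters with $b_1=0$, $b_2=0$ at which $\ell=0$, and there is a tuple $(\hat W_j,\hat b_j)_{j=1}^2$ with $\hat b_1=0$, $\hat b_2=0$ at which the network output equals the linear least squares output $\begin{bmatrix}\tfrac13&\tfrac13&\tfrac13\end{bmatrix}$, $\ell=\tfrac13$, and which is a local minimum of $\ell$.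
   Context: $\mathbf{1}_3$ is the all-ones column vector in $\mathbb{R}^3$; $\|\cdot\|_F$ is the Frobenius norm. *)

(* Defs.v *)
From mathcomp Require Import all_boot all_order all_algebra.
From mathcomp Require Import reals.
Set Implicit Arguments. Unset Strict Implicit. Unset Printing Implicit Defensive.
Import Order.TTheory GRing.Theory Num.Theory.
Local Open Scope ring_scope.

Section Defs.
Variable R : realType.

Definition act (sp sm : R) (x : R) : R :=
  Num.max (sp * x) 0 + Num.min (sm * x) 0.

Definition Xdata : 'M[R]_(2, 3) :=
  \matrix_(i < 2, j < 3)
    (if j == 2%N :> nat then 2^-1 else if i == j :> nat then 1 else 0).
Definition Ydata : 'M[R]_(1, 3) :=
  \matrix_(i < 1, j < 3) (if j == 2%N :> nat then 1 else 0).

Definition net (sp sm : R) (W1 : 'M[R]_(2, 2)) (b1 : 'cV[R]_2)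
  (W2 : 'M[R]_(1, 2)) (b2 : R) : 'M[R]_(1, 3) :=
  W2 *m map_mx (act sp sm) (W1 *m Xdata + b1 *m (const_mx 1 : 'M[R]_(1, 3)))
  + b2 *: (const_mx 1 : 'M[R]_(1, 3)).

Definition frob2 (m n : nat) (A : 'M[R]_(m, n)) : R :=
  \sum_(i < m) \sum_(j < n) (A i j) ^+ 2.

Definition loss (sp sm : R) (W1 : 'M[R]_(2, 2)) (b1 : 'cV[R]_2)
  (W2 : 'M[R]_(1, 2)) (b2 : R) : R :=
  2^-1 * frob2 (net sp sm W1 b1 W2 b2 - Ydata).

Definition is_local_min_loss (sp sm : R) (W1 : 'M[R]_(2, 2)) (b1 : 'cV[R]_2)
  (W2 : 'M[R]_(1, 2)) (b2 : R) : Prop :=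
  exists2 e : R, 0 < e &
    forall (V1 : 'M[R]_(2, 2)) (c1 : 'cV[R]_2) (V2 : 'M[R]_(1, 2)) (c2 : R),
      (forall i j, `|V1 i j - W1 i j| < e) ->
      (forall i j, `|c1 i j - b1 i j| < e) ->
      (forall i j, `|V2 i j - W2 i j| < e) ->
      `|c2 - b2| < e ->
      loss sp sm W1 b1 W2 b2 <= loss sp sm V1 c1 V2 c2.

End Defs.

(* Main.v *)
Require Import Defs.
From mathcomp Require Import all_boot all_order all_algebra.
From mathcomp Require Import reals.
From mathcomp Require Import ring lra.
Import Order.TTheory GRing.Theory Num.Theory.
Local Open Scope ring_scope.
Set Implicit Arguments. Unset Strict Implicit.

Notation i0 := (@ord0 1).
Notation i1 := (lift (@ord0 1) (@ord0 0)).
Notation j0 := (@ord0 2).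
Notation j1 := (lift (@ord0 2) (@ord0 1)).
Notation j2 := (lift (@ord0 2) (lift (@ord0 1) (@ord0 0))).

Lemma netE (R : realType) sp sm (W1 : 'M[R]_(2,2)) b1 W2 b2 (j : 'I_3) :
  net sp sm W1 b1 W2 b2 ord0 j =
  W2 ord0 i0 * act sp sm (W1 i0 i0 * Xdata R i0 j + W1 i0 i1 * Xdata R i1 j + b1 i0 ord0)
  + W2 ord0 i1 * act sp sm (W1 i1 i0 * Xdata R i0 j + W1 i1 i1 * Xdata R i1 j + b1 i1 ord0) + b2.
Proof.
rewrite /net !mxE !big_ord_recl !big_ord0 !mxE !big_ord_recl !big_ord0 !mxE.
by rewrite !addr0 !mulr1.
Qed.

Lemma lossE (R : realType) sp sm (W1 : 'M[R]_(2,2)) b1 W2 b2 :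
  loss sp sm W1 b1 W2 b2 = 2^-1 * ((net sp sm W1 b1 W2 b2 ord0 j0)^+2 +
     (net sp sm W1 b1 W2 b2 ord0 j1)^+2 + (net sp sm W1 b1 W2 b2 ord0 j2 - 1)^+2).
Proof.
rewrite /loss /frob2; set N := net _ _ _ _ _ _.
rewrite !big_ord_recl !big_ord0 !mxE /=.
by rewrite !subr0 !addr0 addrA.
Qed.

Lemma act_pos (R : realType) (sp sm z : R) : 0 < sp -> 0 <= sm -> 0 <= z -> act sp sm z = sp * z.
Proof.
move=> hp hm hz; rewrite /act.
have h1 : 0 <= sp * z by apply: mulr_ge0; lra.
have h2 : 0 <= sm * z by apply: mulr_ge0.
rewrite (max_l h1) (min_r h2); lra.
Qed.

Lemma act_neg (R : realType) (sp sm z : R) : 0 < sp -> 0 <= sm -> z <= 0 -> act sp sm z = sm * z.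
Proof.
move=> hp hm hz; rewrite /act.
have h1 : sp * z <= 0 by rewrite mulr_ge0_le0 //; lra.
have h2 : sm * z <= 0 by rewrite mulr_ge0_le0.
rewrite (max_r h1) (min_l h2); lra.
Qed.


Definition outp (R : realType) sp sm (W1 : 'M[R]_(2,2)) (b1 : 'cV[R]_2) (W2 : 'rV[R]_2) b2 (x0 x1 : R) :=
  W2 ord0 i0 * act sp sm (W1 i0 i0 * x0 + W1 i0 i1 * x1 + b1 i0 ord0)
  + W2 ord0 i1 * act sp sm (W1 i1 i0 * x0 + W1 i1 i1 * x1 + b1 i1 ord0) + b2.

Lemma lossE2 (R : realType) sp sm (W1 : 'M[R]_(2,2)) b1 W2 b2 :
  loss sp sm W1 b1 W2 b2 = 2^-1 * ((outp sp sm W1 b1 W2 b2 1 0)^+2 +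
     (outp sp sm W1 b1 W2 b2 0 1)^+2 + (outp sp sm W1 b1 W2 b2 (2^-1) (2^-1) - 1)^+2).
Proof. by rewrite lossE !netE !mxE. Qed.

Lemma key (R : realType) (p q r : R) : r = (p + q) / 2 -> 3^-1 <= 2^-1 * (p^+2 + q^+2 + (r-1)^+2).
Proof.
move=> ->; rewrite -subr_ge0.
have -> : 2^-1 * (p ^+ 2 + q ^+ 2 + ((p + q) / 2 - 1) ^+ 2) - 3^-1 =
  2^-1 * ((p - 3^-1)^+2 + (q - 3^-1)^+2 + 4^-1 * (p + q - 2 * 3^-1)^+2) by field.
apply: mulr_ge0; first lra.
apply: addr_ge0; first apply: addr_ge0; rewrite ?sqr_ge0 //.
apply: mulr_ge0; rewrite ?sqr_ge0 //; lra.
Qed.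

Lemma part2 (R : realType) (sp sm : R) : 0 < sp -> 0 <= sm ->
  let W1 := (const_mx 1 : 'M[R]_(2,2)) in let W2 := (const_mx (6 * sp)^-1 : 'rV[R]_2) in
  [/\ net sp sm W1 0 W2 0 = const_mx (3^-1),
          loss sp sm W1 0 W2 0 = 3^-1
        & is_local_min_loss sp sm W1 0 W2 0].
Proof.
move=> hp hm W1 W2.
have hsp : sp != 0 by rewrite gt_eqF.
have o_val : forall x0 x1 : R, 0 <= x0 -> 0 <= x1 -> outp sp sm W1 0 W2 0 x0 x1 = 3^-1 * (x0 + x1).
  move=> x0 x1 h0 h1; rewrite /outp !mxE !act_pos //; [field; by rewrite hsp | lra..].
split.
{ apply/matrixP => i j; rewrite (ord1 i) netE !mxE.
  case: j => [[|[|[|//]]] hj] /=; rewrite ?mxE /=.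
  all: rewrite !act_pos //; [field; by rewrite hsp | lra..]. }
{ by rewrite lossE2 !o_val; try lra; field. }
exists 4^-1; first lra.
move=> V1 c1 V2 c2 H1 Hc H2 Hc2.
have -> : loss sp sm W1 0 W2 0 = 3^-1.
  by rewrite lossE2 !o_val; try lra; field.
rewrite lossE2; apply: key.
have := H1 i0 i0; have := H1 i0 i1; have := H1 i1 i0; have := H1 i1 i1.
have := Hc i0 ord0; have := Hc i1 ord0.
rewrite !mxE !ltr_distl => /andP[? ?] /andP[? ?] /andP[? ?] /andP[? ?] /andP[? ?] /andP[? ?].
rewrite /outp !act_pos //; try lra.
Qed.

Definition M2 (R : realType) (a b c d : R) : 'M[R]_(2,2) :=
  \matrix_(i < 2, j < 2) (if i == 0%N :> nat then (if j == 0%N :> nat then a else b)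
                          else (if j == 0%N :> nat then c else d)).
Definition V2 (R : realType) (a b : R) : 'rV[R]_2 :=
  \row_(j < 2) (if j == 0%N :> nat then a else b).

Lemma part1a (R : realType) (sp : R) : 0 < sp ->
  loss sp 0 (M2 1 (-1) 1 0) 0 (V2 (- (2 / sp)) (2 / sp)) 0 = 0.
Proof.
move=> hp; rewrite lossE2 /outp !mxE /=.
rewrite !(mulr1, mulr0, mul0r, mul1r, addr0, add0r, mulN1r, mulNr, addrN).
have A1 : act sp 0 1 = sp by rewrite act_pos //; lra.
have A2 : act sp 0 (-1) = 0 by rewrite act_neg //; lra.
have A3 : act sp 0 0 = 0 by rewrite act_neg //; lra.
have A4 : act sp 0 (2^-1) = sp / 2 by rewrite act_pos //; lra.
rewrite A1 A2 A3 A4.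
have hsp : sp != 0 by rewrite gt_eqF.
field; by rewrite hsp.
Qed.

Lemma part1b (R : realType) (sp sm : R) : 0 < sp -> 0 < sm -> sp != sm ->
  loss sp sm (M2 sm (-sp) (-sp) sm) 0
     (V2 (2 * act sp sm ((sm - sp) / 2))^-1 (2 * act sp sm ((sm - sp) / 2))^-1) 0 = 0.
Proof.
move=> hp hm hne; rewrite lossE2 /outp !mxE /=.
have -> : sm / 2 + - sp / 2 + 0 = (sm - sp) / 2 by ring.
have -> : - sp / 2 + sm / 2 + 0 = (sm - sp) / 2 by ring.
have ha : act sp sm ((sm - sp) / 2) != 0.
{ case: (leP sm sp) => h.
  { have h' : sm < sp by rewrite lt_neqAle h eq_sym hne.
    rewrite act_neg; [|lra|lra|lra].
    by rewrite mulf_neq0 //; [rewrite gt_eqF | rewrite lt_eqF //; lra]. }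
  rewrite act_pos; [|lra|lra|lra].
  rewrite mulf_neq0 // ?gt_eqF //; lra. }
move: ha; set a := act sp sm ((sm - sp) / 2) => ha.
rewrite !(mulr1, mulr0, mul0r, mul1r, addr0, add0r).
rewrite act_pos; [|lra|lra|lra].
rewrite act_neg; [|lra|lra|lra].
field; by rewrite ha.
Qed.

Theorem mainTheorem4 (R : realType) (sp sm : R) :
  0 < sp -> 0 <= sm -> sp != sm ->
  (exists (W1 : 'M[R]_(2, 2)) (W2 : 'M[R]_(1, 2)),
      loss sp sm W1 0 W2 0 = 0) /\
  (exists (W1 : 'M[R]_(2, 2)) (W2 : 'M[R]_(1, 2)),
      [/\ net sp sm W1 0 W2 0 = const_mx (3^-1),
          loss sp sm W1 0 W2 0 = 3^-1
        & is_local_min_loss sp sm W1 0 W2 0]).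
Proof.
move=> hp hm hne; split.
  move: hm hne; rewrite le_eqVlt => /orP[/eqP <- _|hm' hne].
    by exists (M2 1 (-1) 1 0), (V2 (- (2 / sp)) (2 / sp)); exact: part1a.
  by eexists; eexists; exact: part1b.
by eexists; eexists; exact: (part2 hp hm).
Qed.
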